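(* Let $V_A,V_B\subseteq\mathbb{R}^d$ be $k$-dimensional subspaces whose principal angles all equal a common $\theta\in[0,\pi/2]$, with principal vectors $(u_i,v_i)$, and let $w\in\mathbb{R}^d$, $\|w\|=1$, satisfy $\langle w,u_i\rangle=\langle w,v_i\rangle=\alpha$ for all $i=1,\dots,k$. Then $$\eta(V_A,V_B,w) = \alpha\sqrt{k}\,|\tan(\theta/2)|,$$ and the debate advantage $\Delta = \sqrt{(K_A^* )^2+\eta^2}-K_A^*$ (where $K_A^*=\|\Pi_{V_A}w\|$) behaves as $\Delta \sim k\alpha^2\tan^2(\theta/2)/(2K_A^* )$ for small $\theta$ and as $\Delta\sim \alpha\sqrt{k}\tan(\theta/2)$ for large $\theta$.
   Context: Principal angles $\theta_i$ and principal vectors $(u_i,v_i)$: $\cos\theta_i=\max\{\langle u,v\rangle: u\in V_A,\|u\|=1,u\perp u_1..u_{i-1};\ v\in V_B,\|v\|=1,v\perp v_1..v_{i-1}\}$, maximizers $(u_i,v_i)$ with $\langle u_i,v_j\rangle=\cos\theta_i\delta_{ij}$. For $\theta_i>0$, $\tilde v_i=(v_i-\cos\theta_iu_i)/\sin\theta_i$, and the private information value is $\eta(V_A,V_B,w)=\sqrt{\sum_{i:\theta_i>0}\langle w,\tilde v_i\rangle^2}$. ''Small $\theta$'' refers to the regime $\eta\ll K_A^*$ and ''large $\theta$'' to the regime $\eta\gg K_A^*$. *)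

(* Defs.v *)
From HB Require Import structures.
From mathcomp Require Import all_boot all_order all_algebra.
From mathcomp Require Import all_classical all_reals all_analysis.
Unset Printing Implicit Defensive.
Import Order.TTheory GRing.Theory Num.Theory.
Local Open Scope ring_scope.

Section Defs.
Variable R : realType.

Definition dotv (d : nat) (x y : 'rV[R]_d) : R := (x *m y^T) 0 0.
Arguments dotv {d}.
Definition normv (d : nat) (x : 'rV[R]_d) : R := Num.sqrt (dotv x x).

Arguments normv {d}.

(* (u_i, v_i)_{i<k} are principal vectors of (V_A, V_B) with
   cos(theta_i) = c i, following the greedy variational definition. *)
Definition principal_vectors (d k : nat) (VA VB : 'M[R]_d)
    (u v : 'I_k -> 'rV[R]_d) (c : 'I_k -> R) : Prop :=
  forall i : 'I_k,
  [/\ (u i <= VA)%MS, (v i <= VB)%MS,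
      dotv (u i) (u i) = 1, dotv (v i) (v i) = 1 &
    [/\ (forall j : 'I_k, (j < i)%N -> dotv (u i) (u j) = 0 /\ dotv (v i) (v j) = 0),
      (forall j : 'I_k, dotv (u i) (v j) = if i == j then c i else 0)
    & (forall x y : 'rV[R]_d, (x <= VA)%MS -> (y <= VB)%MS ->
        dotv x x = 1 -> dotv y y = 1 ->
        (forall j : 'I_k, (j < i)%N -> dotv x (u j) = 0 /\ dotv y (v j) = 0) ->
        dotv x y <= c i)]].

Arguments principal_vectors {d k}.

Definition principal_angles (d k : nat) (VA VB : 'M[R]_d)
    (u v : 'I_k -> 'rV[R]_d) (th : 'I_k -> R) : Prop :=
  principal_vectors VA VB u v (fun i => cos (th i)) /\
  forall i, 0 <= th i <= pi / 2.

Arguments principal_angles {d k}.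

Definition vtilde (d k : nat) (u v : 'I_k -> 'rV[R]_d) (th : 'I_k -> R)
    (i : 'I_k) : 'rV[R]_d :=
  (sin (th i))^-1 *: (v i - cos (th i) *: u i).

Arguments vtilde {d k}.

Definition eta_priv (d k : nat) (u v : 'I_k -> 'rV[R]_d) (th : 'I_k -> R)
    (w : 'rV[R]_d) : R :=
  Num.sqrt (\sum_(i < k | 0 < th i) (dotv w (vtilde u v th i)) ^+ 2).

Arguments eta_priv {d k}.

Definition is_orth_proj (d : nat) (V : 'M[R]_d) (w p : 'rV[R]_d) : Prop :=
  (p <= V)%MS /\ forall x : 'rV[R]_d, (x <= V)%MS -> dotv (w - p) x = 0.

Arguments is_orth_proj {d}.

Definition debate_adv (K et : R) : R := Num.sqrt (K ^+ 2 + et ^+ 2) - K.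

(* The standing configuration of Corollary 2.11: V_A, V_B k-dimensional,
   all principal angles equal theta in [0, pi/2] with principal vectors (u_i, v_i),
   ||w|| = 1, alpha >= 0, <w,u_i> = <w,v_i> = alpha, and p = Pi_{V_A} w (so K_A^* = ||p||). *)
Definition cor_config (d k : nat) (VA VB : 'M[R]_d) (u v : 'I_k -> 'rV[R]_d)
    (theta alpha : R) (w p : 'rV[R]_d) : Prop :=
  [/\ \rank VA = k, \rank VB = k,
      principal_angles VA VB u v (fun _ => theta) &
    [/\
      normv w = 1, 0 <= alpha,
      (forall i, dotv w (u i) = alpha /\ dotv w (v i) = alpha)
    & is_orth_proj VA w p]].

Arguments cor_config {d k}.

End Defs.


Arguments dotv {R d}.
Arguments normv {R d}.
Arguments principal_vectors {R d k}.
Arguments principal_angles {R d k}.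
Arguments vtilde {R d k}.
Arguments eta_priv {R d k}.
Arguments is_orth_proj {R d}.
Arguments debate_adv {R}.
Arguments cor_config {R d k}.

(* Main.v *)
Require Import Defs.
From HB Require Import structures.
From mathcomp Require Import all_boot all_order all_algebra.
From mathcomp Require Import all_classical all_reals all_analysis.
From mathcomp.algebra_tactics Require Import ring lra.
Import Order.TTheory GRing.Theory Num.Theory.
Local Open Scope ring_scope.

Section H.
Variable R : realType.

Lemma dotvBZ d (w x y : 'rV[R]_d) (a b : R) :
  dotv w (a *: (x - b *: y)) = a * (dotv w x - b * dotv w y).
Proof.
rewrite /dotv; have -> : (a *: (x - b *: y))^T = a *: (x^T - b *: y^T) by apply/matrixP => i j; rewrite !mxE.
rewrite -scalemxAr mulmxBr -scalemxAr.
by rewrite !mxE.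
Qed.

Lemma tan_half (t : R) : 0 < t <= pi / 2 ->
  (sin t)^-1 * (1 - cos t) = tan (t / 2) /\ 0 < tan (t/2).
Proof.
move=> /andP[t0 tp].
have pi0 := pi_gt0 R.
have ht : t = t / 2 + t / 2 by field.
have hs : 0 < sin (t/2) by apply: sin_gt0_pi; apply/andP; split; lra.
have hc : 0 < cos (t/2) by apply: cos_gt0_pihalf; apply/andP; split; lra.
have s2 := sin2cos2 (t/2).
rewrite {1 2}ht sinD cosD /tan.
split; last by apply: divr_gt0.
have -> : 1 - (cos (t / 2) * cos (t / 2) - sin (t / 2) * sin (t / 2))
   = 2 * sin (t/2) ^+ 2 by rewrite -!expr2 s2; ring.
have -> : sin (t / 2) * cos (t / 2) + cos (t / 2) * sin (t / 2)
   = (2 * sin (t/2)) * cos (t/2) by ring.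
set S := sin (t/2) in hs *; set C := cos (t/2) in hc *.
have hS : S != 0 by apply: lt0r_neq0.
have hC : C != 0 by apply: lt0r_neq0.
field. by rewrite hS hC.
Qed.

Lemma eta_val d k (VA VB : 'M[R]_d) (u v : 'I_k -> 'rV[R]_d)
          (theta alpha : R) (w p : 'rV[R]_d) :
  cor_config VA VB u v theta alpha w p ->
  eta_priv u v (fun _ => theta) w = alpha * Num.sqrt k%:R * `|tan (theta / 2)|
  /\ ((k = 0)%N \/ 0 <= tan (theta / 2)) /\ 0 <= alpha.
Proof.
case=> _ _ [_ hth] [_ a0 hw _].
rewrite /eta_priv.
have [k0|kpos] := posnP k.
  subst k. rewrite big_ord0 mulr0n sqrtr0 mulr0 mul0r; split => //; split => //; by left.
have /andP[t0 tp] := hth (Ordinal kpos).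
split; last (split => //; right).
- case: (boolP (0 < theta)) => tpos.
  + have [th1 th2] := tan_half theta (ltac:(by rewrite tpos tp) : 0 < theta <= pi/2).
    have dot : forall i, dotv w (vtilde u v (fun _ => theta) i) = alpha * tan (theta/2).
      move=> i; rewrite /vtilde dotvBZ; case: (hw i) => -> ->.
      by rewrite -th1; ring.
    rewrite (eq_bigl xpredT); last by [].
    under eq_bigr do rewrite dot.
    rewrite sumr_const card_ord -(mulr_natl ((alpha * tan (theta/2))^+2) k) sqrtrM ?ler0n // sqrtr_sqr normrM (ger0_norm a0).
    by rewrite mulrCA mulrA.
  + have th0 : theta = 0 by apply/eqP; rewrite eq_le t0 andbT leNgt.
    rewrite big_pred0; last by [].
    by rewrite sqrtr0 th0 mul0r tan0 normr0 mulr0.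
- case: (boolP (0 < theta)) => tpos.
    have [_ th2] := tan_half theta (ltac:(by rewrite tpos tp) : 0 < theta <= pi/2).
    exact: ltW.
  have th0 : theta = 0 by apply/eqP; rewrite eq_le t0 andbT leNgt.
  by rewrite th0 mul0r tan0.
Qed.

Lemma large_aux (K e s eps : R) : 0 <= K -> 0 <= e -> 0 <= s -> s^+2 = K^+2 + e^+2 ->
  0 < eps -> K < eps * e -> `|s - K - e| <= eps * e.
Proof.
move=> K0 e0 s0 hs ep hK.
have h1 : s <= K + e by nra.
have h2 : e <= s by nra.
rewrite ler_norml; apply/andP; split; lra.
Qed.
Lemma small_aux (K e s eps d : R) : 0 <= K -> 0 <= e -> 0 <= s -> s^+2 = K^+2 + e^+2 ->
  0 < d -> d <= 1 -> d <= eps -> e < d * K -> `|s - K - e^+2/(2*K)| <= eps * (e^+2/(2*K)).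
Proof.
move=> K0 e0 s0 hs d0 d1 de hK.
have Kp : 0 < K by nra.
set x := s - K.
have x0 : 0 <= x by rewrite /x; nra.
have he : e^+2 = x * (2*K + x) by rewrite /x; lra.
have hK2 : K != 0 by apply: lt0r_neq0.
have hT : e^+2/(2*K) = x + x^+2/(2*K).
  by rewrite he; field.
rewrite hT (_ : x - (x + x ^+ 2 / (2 * K)) = - (x^+2/(2*K))); last by ring.
rewrite normrN ger0_norm; last by apply: divr_ge0; nra.
have hx : x * (2 * K) <= d * K ^+ 2 by nra.
have : x^+2/(2*K) <= eps * x.
  rewrite ler_pdivrMr; last by lra.
  have hx2 : 2 * x <= d * K.
    rewrite -(ler_pM2r Kp); nra.
  have hx3 : x <= eps * (2 * K) by nra.
  have := ler_wpM2l x0 hx3. lra.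
have : 0 <= x^+2/(2*K) by apply: divr_ge0; nra.
nra.
Qed.
End H.
Arguments eta_val {R d k VA VB u v theta alpha w p}.
Arguments small_aux {R}.
Arguments large_aux {R}.

Theorem corollary2p11 (R : realType) :
  (* exact value of eta_priv *)
  (forall (d k : nat) (VA VB : 'M[R]_d) (u v : 'I_k -> 'rV[R]_d)
          (theta alpha : R) (w p : 'rV[R]_d),
     cor_config VA VB u v theta alpha w p ->
     eta_priv u v (fun _ => theta) w = alpha * Num.sqrt k%:R * `|tan (theta / 2)|) /\
  (* small-theta regime (eta_priv << K_A): Delta ~ k alpha^2 tan^2(theta/2) / (2 K_A ) *)
  (forall eps : R, 0 < eps -> exists delta : R, 0 < delta /\
     forall (d k : nat) (VA VB : 'M[R]_d) (u v : 'I_k -> 'rV[R]_d)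
            (theta alpha : R) (w p : 'rV[R]_d),
       cor_config VA VB u v theta alpha w p ->
       let K := normv p in
       let et := eta_priv u v (fun _ => theta) w in
       let T := k%:R * alpha ^+ 2 * tan (theta / 2) ^+ 2 / (2 * K) in
       et < delta * K -> `|debate_adv K et - T| <= eps * T) /\
  (* large-theta regime (eta_priv >> K_A): Delta ~ alpha sqrt(k) tan(theta/2) *)
  (forall eps : R, 0 < eps -> exists M : R, 0 < M /\
     forall (d k : nat) (VA VB : 'M[R]_d) (u v : 'I_k -> 'rV[R]_d)
            (theta alpha : R) (w p : 'rV[R]_d),
       cor_config VA VB u v theta alpha w p ->
       let K := normv p in
       let et := eta_priv u v (fun _ => theta) w in
       let T := alpha * Num.sqrt k%:R * tan (theta / 2) in
       M * K < et -> `|debate_adv K et - T| <= eps * T).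
Proof.
split.
  move=> d k VA VB u v theta alpha w p H; by case: (eta_val H).
split.
  move=> eps ep; exists (Order.min 1 eps); split; first by rewrite lt_min ltr01 ep.
  move=> d k VA VB u v theta alpha w p H K et T het.
  have [eq [_ a0]] := eta_val H.
  have e2 : et^+2 = k%:R * alpha^+2 * tan(theta/2)^+2.
    rewrite /et eq !exprMn sqr_sqrtr ?ler0n // real_normK ?num_real // /tan; ring.
  have -> : T = et^+2/(2*K) by rewrite /T e2.
  rewrite /debate_adv.
  apply: (@small_aux R K et _ eps (Order.min 1 eps)).
  - exact: sqrtr_ge0.
  - exact: sqrtr_ge0.
  - exact: sqrtr_ge0.
  - by rewrite sqr_sqrtr // addr_ge0 // sqr_ge0.
  - by rewrite lt_min ltr01 ep.
  - by rewrite ge_min lexx.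
  - by rewrite ge_min lexx orbT.
  - exact: het.
move=> eps ep; exists eps^-1; split; first by rewrite invr_gt0.
move=> d k VA VB u v theta alpha w p H K et T hM.
have [eq [hk a0]] := eta_val H.
have -> : T = et.
  rewrite /T /et eq; case: hk => [->|ht]; first by rewrite mulr0n sqrtr0 !mulr0 !mul0r.
  by rewrite ger0_norm.
rewrite /debate_adv.
have hi : eps * eps^-1 = 1 by rewrite divff // lt0r_neq0.
have K0 : 0 <= K by rewrite /K /normv sqrtr_ge0.
have e0 : 0 <= et by rewrite /et /eta_priv sqrtr_ge0.
apply: large_aux => //.
- by rewrite sqr_sqrtr // addr_ge0 // sqr_ge0.
- have := ltr_pM2l ep; move=> h; rewrite -h in hM; nra.
Qed.
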